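(* Let $V\sim\mathrm{Exp}(\lambda)$, let $V_1,V_2$ be independent copies of $V$, and write $V_{(1:2)}=\min(V_1,V_2)$, $V_{(2:2)}=\max(V_1,V_2)$. For $p_0\ge 0$ and $r\in[0,1]$ define $$R(p_0,r)=\begin{cases}2p_0+2r\,\mathbb{E}[V] & \text{if } p_0\le (1-r)\mathbb{E}[V_{(1:2)}],\\ p_0+r\,\mathbb{E}[V_{(2:2)}]+p_0\Pr[V_{(1:2)}>p_0] & \text{if } (1-r)\mathbb{E}[V_{(1:2)}]<p_0\le(1-r)\mathbb{E}[V_{(2:2)}],\\ 2p_0\Pr[V>p_0] & \text{if } p_0>(1-r)\mathbb{E}[V_{(2:2)}],\end{cases}$$ and let $u_c^*=\sup_{p_0\ge0,r\in[0,1]}R(p_0,r)$, $u_{c,r=0}^*=\sup_{p_0\ge0}R(p_0,0)$. Then $u_c^*=2\mathbb{E}[V]=2/\lambda$ and $u_{c,r=0}^*=\frac{3}{2\lambda}\big(1+e^{-3}\big)$, so $\Delta:=u_c^*-u_{c,r=0}^*=\frac{e^3-3}{2\lambda e^3}>0$, and the relative increase $\mathcal{I}:=\Delta/u_{c,r=0}^*=\frac{e^3-3}{3(1+e^3)}\approx 0.27$ for all $\lambda\in(1,\infty)$.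
   Context: $R(p_0,r)$ is the expected revenue of a creator selling two identical NFTs at common mint price $p_0$ with royalty rate $r$, where a risk-neutral speculator buys 2, 1 or 0 units in the three price regions respectively, reselling to the highest-valuation end-buyers at their valuations, and unsold units are offered by the creator to remaining end-buyers at $p_0$. *)

(* Defs.v *)
From HB Require Import structures.
From mathcomp Require Import all_boot all_order all_algebra.
From mathcomp Require Import all_classical all_reals all_analysis.
Set Implicit Arguments. Unset Strict Implicit. Unset Printing Implicit Defensive.
Import Order.TTheory GRing.Theory Num.Theory.
Import numFieldNormedType.Exports.
Local Open Scope classical_set_scope.
Local Open Scope ring_scope.

Section Revenue.
Context {R : realType}.
Notation mu := (@lebesgue_measure R).

(* V ~ Exp(lam) has density exponential_pdf lam (library: lam * exp(-lam x) on [0,+oo[). *)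

Definition EV (lam : R) : R :=
  fine (\int[mu]_x (x * exponential_pdf lam x)%:E)%E.

Definition PV_gt (lam p : R) : R := fine (exponential_prob lam `]p, +oo[).

(* E[g(V1,V2)] for V1, V2 independent copies of V: integral against the
   joint (product) density f(x) f(y). *)
Definition E2 (lam : R) (g : R -> R -> R) : R :=
  fine (\int[mu]_x \int[mu]_y
          (g x y * exponential_pdf lam x * exponential_pdf lam y)%:E)%E.

Definition Emin (lam : R) : R := E2 lam (fun x y => Num.min x y).
Definition Emax (lam : R) : R := E2 lam (fun x y => Num.max x y).
Definition Pmin_gt (lam p : R) : R :=
  E2 lam (fun x y => if p < Num.min x y then 1 else 0).

Definition revenue (lam p0 r : R) : R :=
  if p0 <= (1 - r) * Emin lam then 2 * p0 + 2 * r * EV lam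
  else if p0 <= (1 - r) * Emax lam then
    p0 + r * Emax lam + p0 * Pmin_gt lam p0
  else 2 * p0 * PV_gt lam p0.

Definition u_c (lam : R) : R :=
  sup [set y | exists p0 r, 0 <= p0 /\ 0 <= r <= 1 /\ y = revenue lam p0 r].

Definition u_c_r0 (lam : R) : R :=
  sup [set y | exists p0, 0 <= p0 /\ y = revenue lam p0 0].

End Revenue.

(* Main.v *)
Require Import Defs.
From HB Require Import structures.
From mathcomp Require Import all_boot all_order all_algebra.
From mathcomp Require Import all_classical all_reals all_analysis.
From mathcomp Require Import measurable_realfun lebesgue_measure.
From mathcomp Require Import ring lra.
Import Order.TTheory GRing.Theory Num.Theory.
Import numFieldNormedType.Exports.
Local Open Scope ring_scope.

Section S0.
Set Implicit Arguments. Unset Strict Implicit. Unset Printing Implicit Defensive.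
Local Open Scope classical_set_scope.
Local Open Scope ring_scope.
Context {R : realType}.
Notation mu := (@lebesgue_measure R).

Lemma is_derive_expNc (c x : R) :
  is_derive x 1 (fun y => expR (- c * y)) (expR (- c * x) * (- c)).
Proof.
have -> : (fun y => expR (- c * y)) = expR \o (fun y => - c * y) by [].
apply: is_derive1_comp.
apply: is_derive_eq.
by rewrite -[RHS]mulr1.
Qed.

Definition pf (A B c G d x : R) := (A * x + B) * expR (- c * x) + G * expR (- d * x).
Definition PF (A B c G d x : R) :=
  - (((A * x + B) / c + A / c ^+ 2) * expR (- c * x)) - G / d * expR (- d * x).

Lemma PF_derive (A B c G d x : R) : 0 < c -> 0 < d ->
  is_derive x 1 (PF A B c G d) (pf A B c G d x).
Proof.
move=> c0 d0.
have := is_derive_expNc c x; have := is_derive_expNc d x => Hd Hc.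
rewrite /PF /pf.
apply: is_derive_eq.
have E (u v : R) : u *: (v : R^o) = u * v by [].
rewrite !E mulr0 !addr0 /GRing.scale /= mulr1.
field.
by rewrite (gt_eqF c0) (gt_eqF d0).
Qed.

Lemma cvg_expNc (c : R) : 0 < c -> expR (- c * x) @[x --> +oo] --> 0.
Proof.
move=> c0.
rewrite (_ : (fun x => expR (- c * x)) =
             (fun z => expR (- z)) \o (fun z => c * z)); last first.
  by apply: eq_fun => x; rewrite mulNr.
apply: (@cvg_comp _ _ _ _ _ _ (pinfty_nbhs R)); last exact: cvgr_expR.
exact: gt0_cvgMry.
Qed.

Lemma cvg_xexpNc (c : R) : 0 < c -> x * expR (- c * x) @[x --> +oo] --> 0.
Proof.
move=> c0.
apply/cvgrPdist_le => e e0; near=> x.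
have x0 : 4 / (c ^+ 2 * e) <= x by near: x; apply: nbhs_pinfty_ge; exact: num_real.
have M0 : 0 < 4 / (c ^+ 2 * e) by rewrite divr_gt0 // mulr_gt0 // exprn_gt0.
have xp : 0 < x by exact: lt_le_trans x0.
have K : 4 <= x * (c ^+ 2 * e).
  by move: x0; rewrite ler_pdivrMr // mulr_gt0 // exprn_gt0.
rewrite sub0r normrN ger0_norm; last by rewrite mulr_ge0 ?expR_ge0 // ltW.
rewrite mulNr expRN ler_pdivrMr ?expR_gt0 //.
rewrite (_ : c * x = c * x / 2 + c * x / 2); last by field.
rewrite expRD.
have h := expR_ge1Dx (c * x / 2).
have h0 : 0 <= 1 + c * x / 2 by rewrite addr_ge0 // divr_ge0 // mulr_ge0 // ltW.
have h2 : (1 + c * x / 2) ^+ 2 <= expR (c * x / 2) * expR (c * x / 2).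
  by rewrite expr2 ler_pM.
apply: (le_trans _ (_ : e * (1 + c * x / 2) ^+ 2 <= _)); last by rewrite ler_pM2l.
have cx0 : 0 <= c * x by rewrite mulr_ge0 // ltW.
have : x * 4 <= x * (x * (c ^+ 2 * e)) by rewrite ler_pM2l.
rewrite !expr2; nra.
Unshelve. end_near. Qed.

Lemma PF_cvg (A B c G d : R) : 0 < c -> 0 < d -> PF A B c G d x @[x --> +oo] --> 0.
Proof.
move=> c0 d0.
have E : PF A B c G d = (fun x => - (A / c * (x * expR (- c * x)) +
     (B / c + A / c ^+ 2) * expR (- c * x)) - G / d * expR (- d * x)).
  by apply: eq_fun => x; rewrite /PF; congr (- _ - _); ring.
rewrite E.
have H : (fun x => - (A / c * (x * expR (- c * x)) +
     (B / c + A / c ^+ 2) * expR (- c * x)) - G / d * expR (- d * x)) @ +oo -->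
   (- (A / c * 0 + (B / c + A / c ^+ 2) * 0) - G / d * 0 : R).
  apply: (cvgB (f := fun x => - (A / c * (x * expR (- c * x)) +
     (B / c + A / c ^+ 2) * expR (- c * x))) (g := fun x => G / d * expR (- d * x))).
    apply: (cvgN (f := fun x => (A / c * (x * expR (- c * x)) +
     (B / c + A / c ^+ 2) * expR (- c * x)))).
    apply: (cvgD (f := fun x => (A / c * (x * expR (- c * x))))
       (g := fun x => (B / c + A / c ^+ 2) * expR (- c * x))).
      apply: cvgMl_tmp; exact: cvg_xexpNc.
    apply: cvgMl_tmp; exact: cvg_expNc.
  apply: cvgMl_tmp; exact: cvg_expNc.
by rewrite !mulr0 addr0 oppr0 addr0 in H.
Qed.

Lemma pfE (A B c G d : R) : 0 < c -> 0 < d ->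
  pf A B c G d = PF (- c * A) (A - c * B) c (- d * G) d.
Proof.
move=> c0 d0; apply: eq_fun => x; rewrite /pf /PF.
have c1 : c != 0 by rewrite gt_eqF.
have d1 : d != 0 by rewrite gt_eqF.
congr (_ + _); last by field.
rewrite -mulNr; congr (_ * _); by field.
Qed.

Lemma PF_cont (A B c G d : R) : 0 < c -> 0 < d -> continuous (PF A B c G d).
Proof.
move=> c0 d0 x; apply: differentiable_continuous; apply/derivable1_diffP.
by have [] := PF_derive A B G x c0 d0.
Qed.

Lemma int_pf (a A B c G d : R) : 0 < c -> 0 < d ->
  (forall x, a <= x -> 0 <= pf A B c G d x) ->
  (\int[mu]_(x in `[a, +oo[) (pf A B c G d x)%:E = (- PF A B c G d a)%:E)%E.
Proof.
move=> c0 d0 h.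
rewrite (@ge0_continuous_FTC2y _ _ (PF A B c G d) a 0) //.
- by rewrite sub0e EFinN.
- by apply: continuous_subspaceT; rewrite pfE //; exact: PF_cont.
- exact: PF_cvg.
all: try (by move=> x _; have [] := PF_derive A B G x c0 d0).
- exact/cvg_at_right_filter/PF_cont.
- by move=> x _; rewrite derive1E; have [] := PF_derive A B G x c0 d0.
Qed.

End S0.

Section S1.
Set Implicit Arguments. Unset Strict Implicit. Unset Printing Implicit Defensive.
Local Open Scope classical_set_scope.
Local Open Scope ring_scope.
Context {R : realType}.
Notation mu := (@lebesgue_measure R).

Lemma int_restrict (D : set R) (h : R -> R) :
  (forall x, ~ D x -> h x = 0) ->
  (\int[mu]_x (h x)%:E = \int[mu]_(x in D) (h x)%:E)%E.
Proof.
move=> hD; rewrite [RHS]integral_mkcond; apply: eq_integral => x _.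
rewrite patchE; case: ifPn => // /negP xD.
by rewrite hD // => Dx; apply: xD; rewrite inE.
Qed.

Lemma pf_meas (D : set R) (A B c G d : R) : 0 < c -> 0 < d ->
  measurable_fun D (EFin \o pf A B c G d).
Proof.
move=> c0 d0; apply/measurable_EFinP; apply: measurable_funTS.
by apply: continuous_measurable_fun; rewrite pfE //; exact: PF_cont.
Qed.

Lemma int_pf_ab (a b A B c G d : R) : 0 < c -> 0 < d -> a <= b ->
  (forall x, a <= x -> 0 <= pf A B c G d x) ->
  (\int[mu]_(x in `[a, b[) (pf A B c G d x)%:E =
     (PF A B c G d b - PF A B c G d a)%:E)%E.
Proof.
move=> c0 d0 ab h.
have E := int_pf c0 d0 h.
have hb : forall x, b <= x -> 0 <= pf A B c G d x.
  by move=> x bx; apply: h; exact: le_trans bx.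
have Eb := int_pf c0 d0 hb.
rewrite (@itv_bndbnd_setU _ _ (BLeft a) (BLeft b) (BInfty _ false)) in E; last 2 first.
- by rewrite bnd_simp.
- by [].
rewrite ge0_integral_setU //= in E; last 3 first.
- exact: pf_meas.
- move=> x [] /=; rewrite in_itv /= => /andP[ax _]; rewrite lee_fin; apply: h => //.
  by apply: le_trans ax.
- apply/disj_setPS => x [] /=; rewrite !in_itv /= => /andP[_ xb] /andP[bx _].
  by move: (lt_le_trans xb bx); rewrite ltxx.
rewrite Eb in E.
move: E; set I := (\int[mu]_(x in _) _)%E.
have I0 : (0 <= I)%E.
  apply: integral_ge0 => x /=; rewrite in_itv /= => /andP[ax _]; rewrite lee_fin.
  exact: h.
move: I I0 => [r| |] //= _ E.
  apply/eqP; rewrite eqe; apply/eqP.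
  move: E => /eqP; rewrite -EFinD eqe => /eqP E; rewrite -E; ring.
Qed.

Lemma pf_measT (A B c G d : R) : 0 < c -> 0 < d ->
  measurable_fun setT (pf A B c G d).
Proof.
by move=> c0 d0; apply: continuous_measurable_fun; rewrite pfE //; exact: PF_cont.
Qed.

Lemma int_split2 (x A1 B1 c1 G1 d1 A2 B2 c2 G2 d2 : R) (h : R -> R) :
  0 <= x -> 0 < c1 -> 0 < d1 -> 0 < c2 -> 0 < d2 ->
  (forall y, 0 <= y -> y < x -> h y = pf A1 B1 c1 G1 d1 y) ->
  (forall y, x <= y -> h y = pf A2 B2 c2 G2 d2 y) ->
  (forall y, 0 <= y -> 0 <= pf A1 B1 c1 G1 d1 y) ->
  (forall y, x <= y -> 0 <= pf A2 B2 c2 G2 d2 y) ->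
  (\int[mu]_(y in `[0%R, +oo[) (h y)%:E =
    (PF A1 B1 c1 G1 d1 x - PF A1 B1 c1 G1 d1 0 - PF A2 B2 c2 G2 d2 x)%:E)%E.
Proof.
move=> x0 c10 d10 c20 d20 h1 h2 p1 p2.
set k := fun y => if y < x then pf A1 B1 c1 G1 d1 y else pf A2 B2 c2 G2 d2 y.
transitivity (\int[mu]_(y in `[0%R, +oo[) (k y)%:E)%E.
  apply: eq_integral => y; rewrite inE /= in_itv /= andbT => y0.
  rewrite /k; case: ifPn => [yx|]; first by rewrite h1.
  by rewrite -leNgt => xy; rewrite h2.
rewrite (@itv_bndbnd_setU _ _ (BLeft 0%R) (BLeft x) (BInfty _ false)) //.
rewrite ge0_integral_setU //=; last 3 first.
- apply/measurable_EFinP; apply: measurable_funTS; apply: measurable_fun_ifT.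
  + by apply: measurable_fun_ltr => //; exact: measurable_cst.
  + exact: pf_measT.
  + exact: pf_measT.
- move=> y [] /=; rewrite !in_itv /= => /andP[y0 yx]; rewrite lee_fin /k.
    by rewrite yx; exact: p1.
  by case: ifPn => _; [apply: p1; exact: le_trans y0 | exact: p2].
- apply/disj_setPS => y [] /=; rewrite !in_itv /= => /andP[_ yx] /andP[xy _].
  by move: (lt_le_trans yx xy); rewrite ltxx.
rewrite (_ : (\int[mu]_(y in `[0%R, x[) (k y)%:E)%E =
   (\int[mu]_(y in `[0%R, x[) (pf A1 B1 c1 G1 d1 y)%:E)%E); last first.
  apply: eq_integral => y; rewrite inE /= in_itv /= => /andP[_ yx].
  by rewrite /k yx.
rewrite (_ : (\int[mu]_(y in `[x, +oo[) (k y)%:E)%E =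
   (\int[mu]_(y in `[x, +oo[) (pf A2 B2 c2 G2 d2 y)%:E)%E); last first.
  apply: eq_integral => y; rewrite inE /= in_itv /= andbT => xy.
  by rewrite /k ltNge xy.
rewrite int_pf_ab // int_pf // -EFinD; congr EFin; ring.
Qed.

End S1.

Section S2.
Set Implicit Arguments. Unset Strict Implicit. Unset Printing Implicit Defensive.
Local Open Scope classical_set_scope.
Local Open Scope ring_scope.
Context {R : realType}.
Notation mu := (@lebesgue_measure R).
Variable lam : R.
Hypothesis lam0 : 0 < lam.

Let pdfE y : 0 <= y -> exponential_pdf lam y = lam * expR (- lam * y).
Proof. by move=> y0; rewrite exponential_pdfE. Qed.
Let pdf0 y : y < 0 -> exponential_pdf lam y = 0.
Proof. exact: lt0_exponential_pdf. Qed.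

Lemma EV_val : EV lam = 1 / lam.
Proof.
rewrite /EV (@int_restrict _ `[0, +oo[).
  rewrite (_ : (\int[mu]_(x in _) _ = \int[mu]_(x in `[0%R, +oo[) (pf lam 0 lam 0 1 x)%R%:E)%E); last first.
    apply: eq_integral => x; rewrite inE /= in_itv /= andbT => x0.
    by rewrite pdfE // /pf mul0r addr0 addr0; congr EFin; ring.
  rewrite int_pf //; last first.
    by move=> x x0; rewrite /pf mul0r !addr0 mulr_ge0 ?expR_ge0 // mulr_ge0 // ltW.
  rewrite /= /PF !mulr0 expR0.
  have l1 : lam != 0 by rewrite gt_eqF.
  by field.
move=> x; rewrite /= in_itv /= andbT => /negP; rewrite -ltNge => x0.
by rewrite pdf0 // mulr0.
Qed.

Lemma PV_val p : 0 <= p -> PV_gt lam p = expR (- lam * p).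
Proof.
move=> p0; rewrite /PV_gt /exponential_prob.
rewrite integral_itv_obnd_cbnd; last first.
  by apply/measurable_EFinP; apply: measurable_funTS; exact: measurable_exponential_pdf.
rewrite (_ : (\int[mu]_(x in _) _ = \int[mu]_(x in `[p, +oo[) (pf 0 lam lam 0 1 x)%R%:E)%E); last first.
  apply: eq_integral => x; rewrite inE /= in_itv /= andbT => px.
  by rewrite pdfE ?(le_trans p0) // /pf mul0r add0r mul0r addr0.
rewrite int_pf //; last first.
  by move=> x x0; rewrite /pf mul0r !add0r mul0r addr0 mulr_ge0 ?expR_ge0 // ltW.
rewrite /= /PF.
have l1 : lam != 0 by rewrite gt_eqF.
by field.
Qed.

Lemma outer_pf (A B c G d : R) : 0 < c -> 0 < d ->
  (forall x, 0 <= x -> 0 <= pf A B c G d x) ->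
  fine (\int[mu]_x (if 0 <= x then pf A B c G d x else 0)%:E)%E = - PF A B c G d 0.
Proof.
move=> c0 d0 h.
rewrite (@int_restrict _ `[0%R, +oo[); last first.
  by move=> x; rewrite /= in_itv /= andbT => /negP/negbTE ->.
rewrite (_ : (\int[mu]_(x in _) _)%E = (\int[mu]_(x in `[0%R, +oo[) (pf A B c G d x)%R%:E)%E); last first.
  by apply: eq_integral => x; rewrite inE /= in_itv /= andbT => ->.
by rewrite int_pf.
Qed.

Let expR2 x : expR (- (2 * lam) * x) = expR (- lam * x) * expR (- lam * x).
Proof. by rewrite -expRD; congr expR; ring. Qed.

Lemma Emin_val : Emin lam = 1 / (2 * lam).
Proof.
have l1 : lam != 0 by rewrite gt_eqF.
rewrite /Emin /E2.
have inner x : (\int[mu]_y (Num.min x y * exponential_pdf lam x * exponential_pdf lam y)%:E)%E =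
    (if 0 <= x then pf 0 1 lam (-1) (2 * lam) x else 0)%:E.
  case: (leP 0 x) => x0.
  - rewrite (@int_restrict _ `[0%R, +oo[); last first.
      move=> y; rewrite /= in_itv /= andbT => /negP; rewrite -ltNge => y0.
      by rewrite (pdf0 y0) mulr0.
    rewrite (@int_split2 _ x (exponential_pdf lam x * lam) 0 lam 0 1
                            0 (x * exponential_pdf lam x * lam) lam 0 1) //.
    + congr EFin; rewrite /PF /pf pdfE // expR2 !mulr0 expR0; by field.
    + move=> y y0 yx; rewrite min_r ?ltW // (pdfE x0) (pdfE y0) /pf; ring.
    + move=> y xy; rewrite min_l // (pdfE x0) (pdfE (le_trans x0 xy)) /pf; ring.
    + move=> y y0; rewrite /pf mul0r addr0 mulr_ge0 ?expR_ge0 //.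
      by rewrite addr0 mulr_ge0 // mulr_ge0 // ?pdfE // ?mulr_ge0 ?expR_ge0 // ltW.
    + move=> y xy; rewrite /pf mul0r mul0r !add0r addr0 mulr_ge0 ?expR_ge0 //.
      by rewrite pdfE // !mulr_ge0 ?expR_ge0 // ltW.
  - by apply: integral0_eq => y _; rewrite (pdf0 x0) mulr0 mul0r.
under eq_integral do rewrite inner.
rewrite outer_pf //; last 2 first.
- by rewrite mulr_gt0.
- move=> x x0; rewrite /pf mul0r add0r mul1r mulN1r subr_ge0 ler_expR.
  have := mulr_ge0 (ltW lam0) x0; nra.
rewrite /PF !mulr0 expR0; by field.
Qed.

Lemma Emax_val : Emax lam = 3 / (2 * lam).
Proof.
have l1 : lam != 0 by rewrite gt_eqF.
rewrite /Emax /E2.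
have inner x : (\int[mu]_y (Num.max x y * exponential_pdf lam x * exponential_pdf lam y)%:E)%E =
    (if 0 <= x then pf lam 0 lam 1 (2 * lam) x else 0)%:E.
  case: (leP 0 x) => x0.
  - rewrite (@int_restrict _ `[0%R, +oo[); last first.
      move=> y; rewrite /= in_itv /= andbT => /negP; rewrite -ltNge => y0.
      by rewrite (pdf0 y0) mulr0.
    rewrite (@int_split2 _ x 0 (x * exponential_pdf lam x * lam) lam 0 1
                            (exponential_pdf lam x * lam) 0 lam 0 1) //.
    + congr EFin; rewrite /PF /pf pdfE // expR2 !mulr0 expR0; by field.
    + move=> y y0 yx; rewrite max_l ?ltW // (pdfE x0) (pdfE y0) /pf; ring.
    + move=> y xy; rewrite max_r // (pdfE x0) (pdfE (le_trans x0 xy)) /pf; ring.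
    + move=> y y0; rewrite /pf mul0r mul0r !add0r addr0 mulr_ge0 ?expR_ge0 //.
      by rewrite (pdfE x0) !mulr_ge0 ?expR_ge0 // ltW.
    + move=> y xy; rewrite /pf mul0r !addr0 mulr_ge0 ?expR_ge0 //.
      by rewrite (pdfE x0) !mulr_ge0 ?expR_ge0 ?(le_trans x0 xy) // ltW.
  - by apply: integral0_eq => y _; rewrite (pdf0 x0) mulr0 mul0r.
under eq_integral do rewrite inner.
rewrite outer_pf //; last 2 first.
- by rewrite mulr_gt0.
- move=> x x0; rewrite /pf addr0 mul1r addr_ge0 ?expR_ge0 //.
  by rewrite !mulr_ge0 ?expR_ge0 // ltW.
rewrite /PF !mulr0 expR0; by field.
Qed.

Lemma Pmin_val p : 0 <= p -> Pmin_gt lam p = expR (- lam * p) * expR (- lam * p).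
Proof.
move=> p0.
have l1 : lam != 0 by rewrite gt_eqF.
rewrite /Pmin_gt /E2.
have inner x : (\int[mu]_y ((if p < Num.min x y then 1 else 0) *
      exponential_pdf lam x * exponential_pdf lam y)%:E)%E =
    (if p < x then exponential_pdf lam x * expR (- lam * p) else 0)%:E.
  case: (ltP p x) => px.
  - rewrite (@int_restrict _ `]p, +oo[); last first.
      move=> y; rewrite /= in_itv /= andbT => /negP yp.
      by rewrite lt_min (negbTE yp) andbF mul0r mul0r.
    rewrite (_ : (\int[mu]_(x in _) _)%E = (\int[mu]_(y in `]p, +oo[)
        (pf 0 (exponential_pdf lam x * lam) lam 0 1 y)%R%:E)%E); last first.
      apply: eq_integral => y; rewrite inE /= in_itv /= andbT => py.
      rewrite lt_min px py mul1r (pdfE (le_trans p0 (ltW py))) /pf; congr EFin; ring.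
    rewrite integral_itv_obnd_cbnd; last exact: pf_meas.
    rewrite int_pf //; last first.
      move=> y py; rewrite /pf mul0r add0r mul0r addr0 mulr_ge0 ?expR_ge0 //.
      by rewrite mulr_ge0 ?exponential_pdf_ge0 // ltW.
    congr EFin; rewrite /PF; by field.
  - apply: integral0_eq => y _.
    by rewrite lt_min ltNge px /= mul0r mul0r.
under eq_integral do rewrite inner.
rewrite (@int_restrict _ `]p, +oo[); last first.
  by move=> x; rewrite /= in_itv /= andbT => /negP/negbTE ->.
rewrite (_ : (\int[mu]_(x in _) _)%E = (\int[mu]_(y in `]p, +oo[)
    (pf 0 (lam * expR (- lam * p)) lam 0 1 y)%R%:E)%E); last first.
  apply: eq_integral => y; rewrite inE /= in_itv /= andbT => py.
  rewrite py (pdfE (le_trans p0 (ltW py))) /pf; congr EFin; ring.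
rewrite integral_itv_obnd_cbnd; last exact: pf_meas.
rewrite int_pf //; last first.
  move=> y py; rewrite /pf mul0r add0r mul0r addr0 mulr_ge0 ?expR_ge0 //.
  by rewrite mulr_ge0 ?expR_ge0 // ltW.
rewrite /= /PF; by field.
Qed.

End S2.

Section S3.
Set Implicit Arguments. Unset Strict Implicit. Unset Printing Implicit Defensive.
Local Open Scope classical_set_scope.
Local Open Scope ring_scope.
Context {R : realType}.

Lemma sup_attained (S : set R) (M : R) : S M -> ubound S M -> sup S = M.
Proof.
move=> SM ub; apply/eqP; rewrite eq_le; apply/andP; split.
  by apply: ge_sup => //; exists M.
by apply: ub_le_sup => //; exists M.
Qed.

Lemma texp_le1 (t : R) : t * expR (- t) <= 1.
Proof.
rewrite expRN ler_pdivrMr ?expR_gt0 // mul1r.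
by apply: le_trans (expR_ge1Dx t); rewrite lerDr.
Qed.

Lemma pexp_le (c p : R) : 0 < c -> p * expR (- c * p) <= 1 / c.
Proof.
move=> c0; rewrite ler_pdivlMr //.
have -> : p * expR (- c * p) * c = (c * p) * expR (- (c * p)) by rewrite mulNr; ring.
exact: texp_le1.
Qed.

Lemma e1_ge2 : 2 <= expR (1 : R).
Proof. by apply: le_trans (expR_ge1Dx 1); rewrite lexx. Qed.

Lemma texp_lehalf (t : R) : t * expR (- t) <= 1 / 2.
Proof.
have h1 : t <= expR (t - 1) by apply: le_trans (expR_ge1Dx _); rewrite addrC subrK.
have h2 : expR (t - 1) * expR (- t) = expR (-1).
  by rewrite -expRD; congr expR; ring.
have h3 : expR (-1) <= 1 / 2 :> R.
  by rewrite expRN div1r lef_pV2 ?posrE ?expR_gt0 //; exact: e1_ge2.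
apply: le_trans h3; rewrite -h2 ler_pM2r ?expR_gt0 //.
Qed.

Lemma reg2_key (t : R) : 1 <= t -> t <= 3 ->
  t + t * expR (- t) <= 3 + 3 * expR (-3).
Proof.
move=> t1 t3.
set s := 3 - t.
have s0 : 0 <= s by rewrite subr_ge0.
have s2 : s <= 2 by rewrite /s; lra.
set a := expR (-3 : R).
set E := expR s.
have a0 : 0 < a by exact: expR_gt0.
have E0 : 0 < E by exact: expR_gt0.
have Et : expR (- t) = E * a by rewrite -expRD; congr expR; rewrite /s; ring.
have E1 : E * (1 - s) <= 1.
  have := expR_ge1Dx (- s); rewrite -/E.
  have -> : expR (- s) = E^-1 by rewrite expRN.
  by move=> h; have := ler_wpM2l (ltW E0) h; rewrite mulfV ?gt_eqF.
have E2 : E <= expR 2 by rewrite ler_expR.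
have e3 : expR 3 = expR 2 * expR 1 :> R by rewrite -expRD; congr expR; ring.
have ae : a * expR 3 = 1 by rewrite /a -expRD addrC subrr expR0.
have e1 := @e1_ge2.
have e20 : 0 < expR (2 : R) := expR_gt0 _.
rewrite Et.
have k1 : (3 - s) * E - 3 <= 2 * s * E by nra.
have k2 : 2 * s * E <= s * expR 3.
  rewrite e3; have : 2 * E <= expR 2 * expR 1 by nra.
  nra.
have k3 : ((3 - s) * E - 3) * a <= s * expR 3 * a by rewrite ler_pM2r //; lra.
have k4 : s * expR 3 * a = s by rewrite -mulrA [_ * a]mulrC ae mulr1.
have ht : t = 3 - s by rewrite /s; ring.
rewrite ht; nra.
Qed.

Lemma expR2' (lam x : R) : expR (- lam * x) * expR (- lam * x) = expR (- (2 * lam) * x).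
Proof. by rewrite -expRD; congr expR; ring. Qed.

Lemma rev_le (lam p0 r : R) : 0 < lam -> 0 <= p0 -> 0 <= r <= 1 ->
  revenue lam p0 r <= 2 / lam.
Proof.
move=> l0 p00 /andP[r0 r1].
have l1 : lam != 0 by rewrite gt_eqF.
have i0 : 0 < lam^-1 by rewrite invr_gt0.
rewrite /revenue (Emin_val l0) (Emax_val l0) (EV_val l0).
have -> : 1 / (2 * lam) = lam^-1 / 2 by field.
have -> : 3 / (2 * lam) = 3 * lam^-1 / 2 by field.
have -> : 1 / lam = lam^-1 by field.
case: ifPn => h1; first by nra.
case: ifPn => h2.
  rewrite (Pmin_val l0 p00) expR2'.
  have := @pexp_le (2 * lam) p0 (mulr_gt0 (ltr0n _ 2) l0).
  have -> : 1 / (2 * lam) = lam^-1 / 2 by field.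
  nra.
rewrite (PV_val l0 p00).
have := @pexp_le lam p0 l0.
rewrite (_ : 1 / lam = lam^-1); last by field.
nra.
Qed.

Lemma pexp_half (c p : R) : 0 < c -> p * expR (- c * p) <= 1 / (2 * c).
Proof.
move=> c0; rewrite ler_pdivlMr ?mulr_gt0 //.
have -> : p * expR (- c * p) * (2 * c) = 2 * ((c * p) * expR (- (c * p))) by rewrite mulNr; ring.
have := texp_lehalf (c * p); lra.
Qed.

Lemma reg2_p (lam p0 : R) : 0 < lam -> 1 / (2 * lam) <= p0 -> p0 <= 3 / (2 * lam) ->
  p0 + p0 * expR (- (2 * lam) * p0) <= 3 / (2 * lam) * (1 + expR (-3)).
Proof.
move=> l0 h1 h3.
have l2 : 0 < 2 * lam by rewrite mulr_gt0.
have l1 : 2 * lam != 0 by rewrite gt_eqF.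
have H1 : 1 <= 2 * lam * p0 by move: h1; rewrite ler_pdivrMr // mulrC.
have H3 : 2 * lam * p0 <= 3 by move: h3; rewrite ler_pdivlMr // mulrC.
have key := reg2_key H1 H3.
have -> : p0 + p0 * expR (- (2 * lam) * p0) =
  (2 * lam * p0 + 2 * lam * p0 * expR (- (2 * lam * p0))) / (2 * lam).
  by rewrite mulNr; field; rewrite gt_eqF.
have -> : 3 / (2 * lam) * (1 + expR (-3)) = (3 + 3 * expR (-3)) / (2 * lam) by ring.
by rewrite ler_pM2r ?invr_gt0.
Qed.

Lemma rev0_le (lam p0 : R) : 0 < lam -> 0 <= p0 ->
  revenue lam p0 0 <= 3 / (2 * lam) * (1 + expR (-3)).
Proof.
move=> l0 p00.
have l1 : lam != 0 by rewrite gt_eqF.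
have i0 : 0 < lam^-1 by rewrite invr_gt0.
have a0 : 0 <= expR (-3 : R) := expR_ge0 _.
have -> : 3 / (2 * lam) * (1 + expR (-3)) = 3 * lam^-1 / 2 * (1 + expR (-3)) by field.
rewrite /revenue (Emin_val l0) (Emax_val l0) (EV_val l0).
have -> : 1 / (2 * lam) = lam^-1 / 2 by field.
have -> : 3 / (2 * lam) = 3 * lam^-1 / 2 by field.
rewrite subr0 !mul1r.
case: ifPn => h1; first by nra.
rewrite -ltNge in h1.
case: ifPn => h2.
  rewrite (Pmin_val l0 p00) expR2' mul0r addr0.
  have := @reg2_p lam p0 l0.
  have -> : 1 / (2 * lam) = lam^-1 / 2 by field.
  have -> : 3 / (2 * lam) = 3 * lam^-1 / 2 by field.
  by move=> /(_ (ltW h1) h2).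
rewrite (PV_val l0 p00).
have := @pexp_half lam p0 l0.
have -> : 1 / (2 * lam) = lam^-1 / 2 by field.
nra.
Qed.

End S3.

Theorem lemma5 (R : realType) (lam : R) (hlam : 1 < lam) :
  let Delta := u_c lam - u_c_r0 lam in
  [/\ u_c lam = 2 * EV lam /\ EV lam = 1 / lam,
      u_c_r0 lam = 3 / (2 * lam) * (1 + expR (-3)),
      Delta = (expR 3 - 3) / (2 * lam * expR 3), 0 < Delta
    & Delta / u_c_r0 lam = (expR 3 - 3) / (3 * (1 + expR 3))].
Proof.
have l0 : 0 < lam by apply: lt_trans hlam.
have l1 : lam != 0 by rewrite gt_eqF.
have Huc : u_c lam = 2 / lam.
  apply: sup_attained.
    exists 0, 1; split; first by [].
    split; first by rewrite ler01 lexx.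
    rewrite /revenue subrr mul0r lexx (EV_val l0); by field.
  by move=> y [p0 [r [p00 [hr ->]]]]; exact: rev_le.
have Hr0 : u_c_r0 lam = 3 / (2 * lam) * (1 + expR (-3)).
  apply: sup_attained.
    exists (3 / (2 * lam)); split; first by rewrite divr_ge0 // mulr_ge0 // ltW.
    rewrite /revenue (Emin_val l0) (Emax_val l0) subr0 !mul1r.
    rewrite ifF; last first.
      apply/negbTE; rewrite -ltNge.
      have : 0 < (2 * lam)^-1 by rewrite invr_gt0 mulr_gt0.
      lra.
    rewrite lexx (Pmin_val l0) ?divr_ge0 ?mulr_ge0 ?ltW // expR2'.
    have -> : - (2 * lam) * (3 / (2 * lam)) = -3 by field.
    by ring.
  by move=> y [p0 [p00 ->]]; exact: rev0_le.
have e3 : 4 <= expR (3 : R) by apply: le_trans (expR_ge1Dx 3); rewrite lexx.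
have e30 : expR (3 : R) != 0 by rewrite gt_eqF ?expR_gt0.
have e31 : 1 + expR (3 : R) != 0 by rewrite gt_eqF // addr_gt0 ?expR_gt0.
have eN : expR (-3) = (expR (3 : R))^-1 by rewrite expRN.
rewrite /= Huc Hr0 (EV_val l0) eN.
split.
- by split => //; field.
- by [].
- by field; rewrite e30 l1.
- have -> : 2 / lam - 3 / (2 * lam) * (1 + (expR 3)^-1) = (expR 3 - 3) / (2 * lam * expR 3) by field; rewrite e30 l1.
  by rewrite divr_gt0 ?mulr_gt0 ?expR_gt0 // subr_gt0; apply: lt_le_trans e3; lra.
- by field; rewrite e30 l1 e31.
Qed.
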